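(* Assume $\mathrm{recc}(C)\subseteq\mathrm{recc}(P^B)$. For every $k\in N_2$, $$S_k^C=\{\bar x\}+\mathrm{conv}\Big(\bigcup_{j\in N_1\cup N_2}\{\lambda\bar r^j:\alpha_j<\lambda<\beta_j\}\Big)+\{\lambda\bar r^k:\lambda\le0\}+\mathrm{recc}(C).$$
   Context: Let $A\in\mathbb{R}^{m\times n}$ have full row rank, $b\in\mathbb{R}^m$, and $P=\{x\in\mathbb{R}^n_+:Ax=b\}$. Let $C\subseteq\mathbb{R}^n$ be an open convex set. Fix a basis $B$ of $P$ with nonbasic set $N=\{1,\dots,n\}\setminus B$. Write $P=\{x:x_i=\bar b_i-\sum_{j\in N}\bar a_{ij}x_j\ (i\in B),\ x\ge0\}$ with $\bar b\ge0$. The basic solution $\bar x$ has $\bar x_i=\bar b_i$ ($i\in B$) and $0$ ($i\in N$). $P^B$ is obtained by dropping $x_i\ge0$ for $i\in B$. For $j\in N$, $\bar r^j$ has $\bar r^j_k=-\bar a_{kj}$ ($k\in B$), $\bar r^j_j=1$, and $0$ otherwise. Thus $P^B=\{\bar x+\sum_{j\in N}x_j\bar r^j:x_j\ge0\}$. It is assumed that $\bar x\notin\mathrm{cl}(C)$. For $j\in N$, $\alpha_j=\inf\{\lambda\ge0:\bar x+\lambda\bar r^j\in C\}$ and $\beta_j=\sup\{\lambda\ge0:\bar x+\lambda\bar r^j\in C\}$, with $\alpha_j=+\infty$, $\beta_j=-\infty$ if the halfline misses $C$. Define - $N_1=\{j:\alpha_j\in(0,\infty),\beta_j=+\infty\}$;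 - $N_2=\{j:\alpha_j\in(0,\infty),\beta_j\in(\alpha_j,\infty)\}$. For a set $K$, $\mathrm{recc}(K)=\{d:x+\lambda d\in K\ \forall x\in K,\lambda\ge0\}$. For $k\in N_2$, $S_k^C=\{\bar x\}+\mathrm{conv}\big(\bigcup_{j\in N_2}\{\lambda\bar r^j:0\le\lambda<\beta_j\}\big)+\{\lambda\bar r^k:\lambda\le0\}+\mathrm{recc}(C)$. *)

(* Defs.v *)
From HB Require Import structures.
From mathcomp Require Import all_boot all_order all_algebra.
From mathcomp Require Import boolp classical_sets reals constructive_ereal ereal.
Set Implicit Arguments. Unset Strict Implicit. Unset Printing Implicit Defensive.
Import Order.TTheory GRing.Theory Num.Theory.
Local Open Scope classical_set_scope.
Local Open Scope ring_scope.

(* Vectors of R^n are column vectors 'cV[R]_n; coordinate i of x is x i 0. *)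
Section Defs.
Variables (R : realType) (n : nat).
Notation vec := 'cV[R]_n.

Definition msum (X Y : set vec) : set vec :=
  [set z | exists x y, X x /\ Y y /\ z = x + y].

Definition conv (S : set vec) : set vec :=
  [set z | exists (k : nat) (w : 'I_k -> R) (p : 'I_k -> vec),
     (forall i, 0 <= w i) /\ \sum_(i < k) w i = 1 /\ (forall i, S (p i)) /\
     z = \sum_(i < k) w i *: p i].

Definition convex_set (K : set vec) : Prop :=
  forall x y t, K x -> K y -> 0 <= t <= 1 -> K ((1 - t) *: x + t *: y).

(* openness in the usual topology of R^n (sup-norm balls) *)
Definition open_set (K : set vec) : Prop :=
  forall x, K x -> exists2 e : R, 0 < e &
    forall y : vec, (forall i, `|y i 0 - x i 0| < e) -> K y.

Definition in_closure (K : set vec) (x : vec) : Prop :=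
  forall e : R, 0 < e -> exists2 y : vec, K y & forall i, `|y i 0 - x i 0| < e.

Definition recc (K : set vec) : set vec :=
  [set d | forall x (l : R), K x -> 0 <= l -> K (x + l *: d)].

End Defs.

(* B is a basis of A : m column indices whose columns are linearly independent *)
Definition is_basis (R : realType) (m n : nat) (A : 'M[R]_(m, n)) (B : {set 'I_n}) :=
  #|B| = m /\
  forall y : 'cV[R]_n, (forall j, j \notin B -> y j 0 = 0) -> A *m y = 0 -> y = 0.

(* P^B : P with the nonnegativity constraints of the basic variables dropped *)
Definition PB (R : realType) (m n : nat) (A : 'M[R]_(m, n)) (b : 'cV[R]_m)
  (B : {set 'I_n}) : set 'cV[R]_n :=
  [set x | A *m x = b /\ forall j, j \notin B -> 0 <= x j 0].

Definition alpha (R : realType) (n : nat) (C : set 'cV[R]_n) (xbar r : 'cV[R]_n)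
  : \bar R :=
  ereal_inf [set (l%:E) | l in [set l : R | 0 <= l /\ C (xbar + l *: r)]].

Definition beta (R : realType) (n : nat) (C : set 'cV[R]_n) (xbar r : 'cV[R]_n)
  : \bar R :=
  ereal_sup [set (l%:E) | l in [set l : R | 0 <= l /\ C (xbar + l *: r)]].

(* N1 and N2 (membership for a nonbasic index j, with ray r = rbar^j) *)
Definition inN1 (R : realType) (n : nat) (C : set 'cV[R]_n) (xbar r : 'cV[R]_n) :=
  (0 < alpha C xbar r < +oo)%E /\ beta C xbar r = +oo%E.

Definition inN2 (R : realType) (n : nat) (C : set 'cV[R]_n) (xbar r : 'cV[R]_n) :=
  (0 < alpha C xbar r < +oo)%E /\ (alpha C xbar r < beta C xbar r < +oo)%E.

(* Main.v *)
Require Import Defs.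
From HB Require Import structures.
From mathcomp Require Import all_boot all_order all_algebra.
From mathcomp Require Import boolp classical_sets reals constructive_ereal ereal.
From mathcomp Require Import lra ring.
Import Order.TTheory GRing.Theory Num.Theory.
Local Open Scope classical_set_scope.
Local Open Scope ring_scope.

Lemma abel1 (V : zmodType) (x a q v d : V) :
  x + (a + q) + v + d = x + a + v + (d + q).
Proof. by rewrite addrA (addrAC (x + a)) (addrAC (x + a + v)) addrA. Qed.

Lemma abel2 (V : zmodType) (x a q v : V) :
  x + (a + q) + (v - q) = x + a + v.
Proof. by rewrite [x + (a + q)]addrA -(addrA (x + a)) (addrCA q) subrr addr0. Qed.

Section Aux.
Variables (R : realType) (n : nat).
Notation vec := 'cV[R]_n.

Lemma recc0 (C : set vec) : recc C 0.
Proof. by move=> x l Cx _; rewrite scaler0 addr0. Qed.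

Lemma reccD (C : set vec) u v : recc C u -> recc C v -> recc C (u + v).
Proof.
move=> hu hv x l Cx l0; rewrite scalerDr addrA; apply: hv => //; exact: hu.
Qed.

Lemma reccZ (C : set vec) (a : R) u : 0 <= a -> recc C u -> recc C (a *: u).
Proof. move=> a0 hu x l Cx l0; rewrite scalerA; apply: hu => //; exact: mulr_ge0. Qed.

Lemma recc_sum (C : set vec) k (w : 'I_k -> R) (v : 'I_k -> vec) :
  (forall i, 0 <= w i) -> (forall i, recc C (v i)) ->
  recc C (\sum_(i < k) w i *: v i).
Proof.
move=> w0 hv; elim/big_ind: _ => //; [exact: recc0| exact: reccD|].
move=> i _; exact: reccZ.
Qed.

Lemma N2_real (C : set vec) x r : inN2 C x r ->
  exists a b : R, alpha C x r = a%:E /\ beta C x r = b%:E /\ 0 < a /\ a < b.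
Proof.
case=> /andP[h1 h2] /andP[h3 h4].
move: h1 h2 h3 h4; case: (alpha C x r) => [a| |] //; case: (beta C x r) => [c| |] //.
move=> h1 _ h3 _; exists a, c; split => //; split => //.
Qed.

Lemma N1_real (C : set vec) x r : inN1 C x r ->
  exists a : R, alpha C x r = a%:E /\ 0 < a /\ beta C x r = +oo%E.
Proof.
case=> /andP[h1 h2] h3.
move: h1 h2; case: (alpha C x r) => [a| |] // h1 _; exists a; split => //.
Qed.

Lemma beta_big (C : set vec) (x r : vec) : beta C x r = +oo%E ->
  forall L : R, exists l, L <= l /\ 0 <= l /\ C (x + l *: r).
Proof.
move=> hb L; apply: contrapT => hn.
have : (beta C x r <= L%:E)%E.
  apply: ge_ereal_sup => _ [l [l0 Cl] <-]; rewrite lee_fin.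
  rewrite leNgt; apply/negP => hL; apply: hn; exists l; split => //.
  exact: ltW.
by rewrite hb.
Qed.

Lemma N1_recc (C : set vec) x r : open_set C -> convex_set C ->
  beta C x r = +oo%E -> recc C r.
Proof.
move=> oC cC hb y l Cy l0.
have [l0'|lpos] : l = 0 \/ 0 < l.
  by move: l0; rewrite le_eqVlt => /orP[/eqP ->|->]; [left|right].
  by rewrite l0' scale0r addr0.
have [e e0 he] := oC y Cy.
set M := \sum_i `|y i 0 - x i 0|.
have M0 : 0 <= M by apply: sumr_ge0 => i _.
have hM i : `|y i 0 - x i 0| <= M.
  by rewrite /M (bigD1 i) //= lerDl; apply: sumr_ge0.
set q := l * (M + 1) / e.
have qe : q * e = l * (M + 1) by rewrite /q; field; rewrite gt_eqF.
have q0 : 0 < q by rewrite /q; apply: divr_gt0 => //; apply: mulr_gt0 => //; lra.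
have [L [hL [L0 CL]]] := beta_big _ _ _ hb (l + q).
have Ll : 0 < L - l by lra.
set s := l / (L - l).
have s0 : 0 < s by apply: divr_gt0.
have hs : s * (M + 1) <= e.
  rewrite /s mulrAC ler_pdivrMr // -qe; nra.

set y' := y + s *: (y - x).
have Cy' : C y'.
  apply: he => i; rewrite !mxE.
  have -> : y i 0 + s * (y i 0 + - x i 0) - y i 0 = s * (y i 0 - x i 0) by ring.
  rewrite normrM gtr0_norm //.
  have := hM i => h.
  have : s * `|y i 0 - x i 0| <= s * M by apply: ler_wpM2l => //; exact: ltW.
  nra.
have L0' : 0 < L by lra.
have t01 : 0 <= l / L <= 1.
  apply/andP; split; first by apply: divr_ge0 => //.
  by rewrite ler_pdivrMr // mul1r; lra.
have := cC y' (x + L *: r) (l / L) Cy' CL t01.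
suff -> : (1 - l / L) *: y' + (l / L) *: (x + L *: r) = y + l *: r by [].
apply/matrixP => i j; rewrite !mxE /s.
field; apply/andP; split; rewrite gt_eqF //.
Qed.

Lemma memE (S K D : set vec) x z :
  msum (msum (msum [set x] S) K) D z <->
  exists c v d, S c /\ K v /\ D d /\ z = x + c + v + d.
Proof.
split.
  move=> [a [d [[b [v [[x' [c [xx [Sc ->]]]] [Kv ->]]]] [Dd ->]]]].
  by exists c, v, d; rewrite (_ : x' = x).

move=> [c [v [d [Sc [Kv [Dd ->]]]]]].
rewrite /msum /=.
exists (x + c + v), d; split; last by split.
exists (x + c), v; split; last by split.
by exists x, c.
Qed.

End Aux.
Arguments recc0 {R n C}.
Arguments reccD {R n C u v}.
Arguments reccZ {R n C a u}.
Arguments recc_sum {R n C k w v}.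
Arguments N2_real {R n C x r}.
Arguments N1_real {R n C x r}.
Arguments N1_recc {R n C x r}.
Arguments memE {R n S K D x z}.

Theorem proposition5 (R : realType) (m n : nat) (A : 'M[R]_(m, n)) (b : 'cV[R]_m)
  (C : set 'cV[R]_n) (B : {set 'I_n}) (xbar : 'cV[R]_n) (rbar : 'I_n -> 'cV[R]_n) :
  \rank A = m ->
  is_basis A B ->
  (* xbar is the basic solution of B, and it is feasible (bbar >= 0) *)
  A *m xbar = b -> (forall j, j \notin B -> xbar j 0 = 0) ->
  (forall i, 0 <= xbar i 0) ->
  (* rbar j (j nonbasic) is the extreme ray of P^B in direction x_j *)
  (forall j, j \notin B ->
     A *m rbar j = 0 /\ rbar j j 0 = 1 /\
     forall k, k \notin B -> k != j -> rbar j k 0 = 0) ->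
  open_set C -> convex_set C -> ~ in_closure C xbar ->
  recc C `<=` recc (PB A b B) ->
  forall k, k \notin B -> inN2 C xbar (rbar k) ->
    msum (msum (msum [set xbar]
      (conv [set v | exists j, j \notin B /\ inN2 C xbar (rbar j) /\
               exists l : R, 0 <= l /\ (l%:E < beta C xbar (rbar j))%E /\
                 v = l *: rbar j]))
      [set v | exists l : R, l <= 0 /\ v = l *: rbar k])
      (recc C)
    =
    msum (msum (msum [set xbar]
      (conv [set v | exists j, j \notin B /\
               (inN1 C xbar (rbar j) \/ inN2 C xbar (rbar j)) /\
               exists l : R, (alpha C xbar (rbar j) < l%:E)%E /\
                 (l%:E < beta C xbar (rbar j))%E /\ v = l *: rbar j]))
      [set v | exists l : R, l <= 0 /\ v = l *: rbar k])
      (recc C).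
Proof.
move=> _ _ _ _ _ _ oC cC _ _ k kB k2.
have [ak [bk [ea [eb [ak0 akb]]]]] := N2_real k2.
set rho := (ak + bk) / 2.
have rho1 : ak < rho by rewrite /rho; lra.
have rho2 : rho < bk by rewrite /rho; lra.
apply/seteqP; split => z /memE [c [v [d [hc [[l [l0 ->]] [hd ->]]]]]]; apply/memE.
- case: hc => K [w [p [w0 [w1 [hp ->]]]]].
  set S12 := [set v | exists j, j \notin B /\
               (inN1 C xbar (rbar j) \/ inN2 C xbar (rbar j)) /\
               exists l : R, (alpha C xbar (rbar j) < l%:E)%E /\
                 (l%:E < beta C xbar (rbar j))%E /\ v = l *: rbar j].
  have hq : forall i, exists qt : 'cV[R]_n * R,
      S12 qt.1 /\ 0 <= qt.2 <= 1 /\ p i = qt.2 *: qt.1.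
    move=> i; have [j [jB [j2 [la [la0 [lab ->]]]]]] := hp i.
    have [a [b' [ea' [eb' [a0 ab]]]]] := N2_real j2.
    rewrite eb' lte_fin in lab.
    case: (ltP a la) => hla.
      exists (la *: rbar j, 1); split; last by rewrite scale1r lexx ler01.
      exists j; split => //; split; first by right.
      by exists la; rewrite ea' eb' !lte_fin.
    set la' := (a + b') / 2.
    have h1 : a < la' by rewrite /la'; lra.
    have h2 : la' < b' by rewrite /la'; lra.
    exists (la' *: rbar j, la / la'); split.
      exists j; split => //; split; first by right.
      by exists la'; rewrite ea' eb' !lte_fin.
    split.
      apply/andP; split; first by apply: divr_ge0 => //; lra.
      by rewrite ler_pdivrMr ?mul1r; lra.
    have la'0 : 0 < la' by lra.
    by rewrite /= scalerA divfK // gt_eqF.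
  case: (choice hq) => qt hqt.
  pose w' (i : 'I_(K + K)) := match split i with
    | inl a => w a * (qt a).2 | inr a => w a * (1 - (qt a).2) end.
  pose p' (i : 'I_(K + K)) := match split i with
    | inl a => (qt a).1 | inr a => rho *: rbar k end.
  have sl i : split (lshift K i) = inl i := unsplitK (inl i).
  have sr i : split (rshift K i) = inr i := unsplitK (inr i).
  set mu := \sum_(i < K) w i * (1 - (qt i).2).
  have mu0 : 0 <= mu.
    apply: sumr_ge0 => i _; apply: mulr_ge0 => //.
    by have [_ [/andP[_ ?] _]] := hqt i; lra.
  exists (\sum_(i < K + K) w' i *: p' i), ((l - mu * rho) *: rbar k), d.
  split.
    exists (K + K), w', p'; split.
      move=> i; rewrite /w'; case: (split i) => a; apply: mulr_ge0 => //;
        by have [_ [/andP[? ?] _]] := hqt a; lra.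
    split.
      rewrite big_split_ord /w' /=.
      under eq_bigr do rewrite sl.
      under [X in _ + X = _]eq_bigr do rewrite sr.
      rewrite -big_split /= -[in RHS]w1; apply: eq_bigr => i _.
      by rewrite -mulrDr addrCA subrr addr0 mulr1.
    split => // i; rewrite /p'; case: (split i) => a.
      by have [? _] := hqt a.
    exists k; split => //; split; first by right.
    by exists rho; rewrite ea eb !lte_fin.
  split.
    exists (l - mu * rho); split => //.
    have : 0 <= mu * rho by apply: mulr_ge0 => //; lra.
    lra.
  split => //.
  have -> : \sum_(i < K + K) w' i *: p' i =
      \sum_(i < K) w i *: p i + (mu * rho) *: rbar k.
    rewrite big_split_ord /w' /p' /=.
    under eq_bigr do rewrite sl.
    under [X in _ + X = _]eq_bigr do rewrite sr.
    congr (_ + _).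
      apply: eq_bigr => i _; have [_ [_ ->]] := hqt i.
      by rewrite scalerA.
    by rewrite -scalerA scaler_suml.
  rewrite scalerBl; congr (_ + _).
  by rewrite abel2.
- case: hc => K [w [p [w0 [w1 [hp ->]]]]].
  set S2 := [set v | exists j, j \notin B /\ inN2 C xbar (rbar j) /\
               exists l : R, 0 <= l /\ (l%:E < beta C xbar (rbar j))%E /\
                 v = l *: rbar j].
  pose p' i := if `[< S2 (p i) >] then p i else 0.
  exists (\sum_(i < K) w i *: p' i), (l *: rbar k),
    (d + \sum_(i < K) w i *: (p i - p' i)).
  split.
    exists K, w, p'; split => //; split => //; split => // i.
    rewrite /p'; case: asboolP => // _.
    exists k; split => //; split => //; exists 0; split => //; split.
      by rewrite eb lte_fin; lra.
    by rewrite scale0r.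
  split; first by exists l.
  split.
    apply: reccD => //; apply: recc_sum => // i.
    rewrite /p'; case: asboolP => h; first by rewrite subrr; exact: recc0.
    have [j [jB [h12 [la [hal [hlb epi]]]]]] := hp i.
    rewrite subr0 epi; case: h12 => [j1|j2].
      have [a [ea' [a0 eb']]] := N1_real j1.
      apply: reccZ; last exact: N1_recc oC cC eb'.
      by rewrite ea' lte_fin in hal; lra.
    exfalso; apply: h; exists j; split => //; split => //; exists la; split => //.
    have [a [b' [ea' [eb' [a0 ab]]]]] := N2_real j2.
    by rewrite ea' lte_fin in hal; lra.
  rewrite -abel1; congr (_ + _ + _ + _).
  rewrite -big_split /=; apply: eq_bigr => i _.
  by rewrite -scalerDr addrC subrK.
Qed.
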